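(* Let $f:\mathbb{N}\rightharpoonup\mathbb{N}$ be a partial function. Then the pca $\mathcal{K}_1^f$ is isomorphic to the pca $\mathcal{K}_1[f]$.
   Context: $\mathcal{K}_1$ is Kleene's first pca: underlying set $\mathbb{N}$, application $nm\simeq\varphi_n(m)$ where $\varphi_n$ is the $n$-th partial recursive function. $\mathcal{K}_1^f$ is the pca on $\mathbb{N}$ with application $nm\simeq\varphi^f_n(m)$, where $\varphi^f_n$ is the $n$-th partial function computable with an oracle for $f$. A pca is a set with a partial binary application admitting $K,S$ with $Kab=a$, $Sab{\downarrow}$, $Sabc\simeq ac(bc)$; each pca has fixed Booleans $\top,\bot$, pairing $p$ with projections $p_0,p_1$, and a coding $[u_0,\dots,u_{n-1}]$ of finite sequences with concatenation $\ast$. For a pca $A$ and partial $f:A\rightharpoonup A$, the pca $A[f]$ has underlying set $A$; an $f$-dialogue between $a,b$ is a code $u=[u_0,\dots,u_{n-1}]$ such that for each $i<n$ there is $v_i$ with $a\cdot([b]\ast[u_0,\dots,u_{i-1}])=p\bot v_i$ and $f(v_i)$ defined and equal to $u_i$; and $a\cdot^f b=c$ iff there is an $f$-dialogue $u$ between $a,b$ with $a\cdot([b]\ast u)=p\top c$. An applicative morphism $\gamma:A\to B$ is a function from $A$ to nonempty subsets of $B$ with some $r\in B$ such that $aa'{\downarrow}$, $b\in\gamma(a)$, $b'\in\gamma(a')$ imply $rbb'{\downarrow}$ and $rbb'\in\gamma(aa')$; composition is $(\delta\gamma)(a)=\bigcup_{b\in\gamma(a)}\delta(b)$, identities are $a\mapsto\{a\}$.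 Pcas $A,B$ are isomorphic if there are applicative morphisms $\gamma:A\to B$, $\delta:B\to A$ whose composites $\delta\gamma$, $\gamma\delta$ equal the identity morphisms. *)

(* Defs.v *)
From Stdlib Require Import Arith List Cantor.
Import ListNotations.

(* A partial binary application on a set A is represented by a         *)
(* relation  app a b c  meaning  "a.b is defined and equals c".        *)

Record PAS := { carrier : Type; app : carrier -> carrier -> carrier -> Prop }.

Definition app2 (A : PAS) (a b c d : carrier A) : Prop :=
  exists e, app A a b e /\ app A e c d.

(* gamma : A -> nonempty subsets of B, tracked by r *)
Definition applicative_morphism (A B : PAS)
  (gamma : carrier A -> carrier B -> Prop) : Prop :=
  (forall a, exists b, gamma a b) /\
  exists r : carrier B,
    forall a a' c b b', app A a a' c -> gamma a b -> gamma a' b' ->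
      exists d, app2 B r b b' d /\ gamma c d.

Definition comp_morph {A B C : Type} (delta : B -> C -> Prop)
  (gamma : A -> B -> Prop) : A -> C -> Prop :=
  fun a c => exists b, gamma a b /\ delta b c.

Definition id_morph (A : Type) : A -> A -> Prop := fun a a' => a' = a.

Definition morph_eq {A B : Type} (g h : A -> B -> Prop) : Prop :=
  forall a b, g a b <-> h a b.

Definition pca_isomorphic (A B : PAS) : Prop :=
  exists (gamma : carrier A -> carrier B -> Prop)
         (delta : carrier B -> carrier A -> Prop),
    applicative_morphism A B gamma /\ applicative_morphism B A delta /\
    morph_eq (comp_morph delta gamma) (id_morph (carrier A)) /\
    morph_eq (comp_morph gamma delta) (id_morph (carrier B)).

(* Unary mu-recursive functions over nat, multi-argument functions     *)
(* being handled through the Cantor pairing  <x,y> = Cantor.to_nat.   *)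

Definition cpair (x y : nat) : nat := Cantor.to_nat (x, y).

Inductive code : Type :=
| cZero
| cSucc
| cId
| cFst
| cSnd
| cOracle
| cPair (F G : code)
| cComp (F G : code)
| cRec  (F G : code)         (* h<x,0> = F x ; h<x,n+1> = G<<x,n>, h<x,n>> *)
| cMu   (F : code).          (* x |-> least n with F<x,n> = 0 (all earlier defined) *)

Inductive eval (f : nat -> option nat) : code -> nat -> nat -> Prop :=
| ev_zero x : eval f cZero x 0
| ev_succ x : eval f cSucc x (S x)
| ev_id x : eval f cId x x
| ev_fst x : eval f cFst x (fst (Cantor.of_nat x))
| ev_snd x : eval f cSnd x (snd (Cantor.of_nat x))
| ev_oracle x y : f x = Some y -> eval f cOracle x y
| ev_pair F G x y z : eval f F x y -> eval f G x z -> eval f (cPair F G) x (cpair y z)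
| ev_comp F G x y z : eval f G x y -> eval f F y z -> eval f (cComp F G) x z
| ev_rec0 F G x z y : Cantor.of_nat z = (x, 0) -> eval f F x y ->
    eval f (cRec F G) z y
| ev_recS F G x n z w y : Cantor.of_nat z = (x, S n) ->
    eval f (cRec F G) (cpair x n) w ->
    eval f G (cpair (cpair x n) w) y -> eval f (cRec F G) z y
| ev_mu F x n : eval f F (cpair x n) 0 ->
    (forall m, m < n -> exists k, eval f F (cpair x m) (S k)) ->
    eval f (cMu F) x n.

(* Goedel numbering of codes: 0 codes cZero; n+1 = 10*q + t codes a
   constructor selected by t, with arguments decoded from q
   (via Cantor unpairing for binary constructors). Every argument is
   decoded from a strictly smaller number, so fuel n+1 suffices. *)
Fixpoint decode_fuel (fuel n : nat) : code :=
  match fuel with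
  | 0 => cZero
  | S k =>
    match n with
    | 0 => cZero
    | S m =>
      let q := m / 10 in
      let ab := Cantor.of_nat q in
      match m mod 10 with
      | 0 => cZero
      | 1 => cSucc
      | 2 => cId
      | 3 => cFst
      | 4 => cSnd
      | 5 => cOracle
      | 6 => cPair (decode_fuel k (fst ab)) (decode_fuel k (snd ab))
      | 7 => cComp (decode_fuel k (fst ab)) (decode_fuel k (snd ab))
      | 8 => cRec (decode_fuel k (fst ab)) (decode_fuel k (snd ab))
      | _ => cMu (decode_fuel k q)
      end
    end
  end.

Definition decode (n : nat) : code := decode_fuel (S n) n.

Definition phi (f : nat -> option nat) (n m y : nat) : Prop := eval f (decode n) m y.

Definition K1f (f : nat -> option nat) : PAS := {| carrier := nat; app := phi f |}.

(* K_1 : plain partial recursive functions; a code using the oracle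
   with the nowhere-defined oracle just diverges at oracle calls, so
   phi_n ranges over exactly the partial recursive functions. *)
Definition K1 : PAS := K1f (fun _ => None).

(* Coding of finite sequences in K_1 (a fixed recursive bijection
   list nat -> nat): [] = 0, [x; l] = 1 + <x, [l]>. Concatenation
   of codes is  code l1 * code l2 = code (l1 ++ l2). *)
Fixpoint seqcode (l : list nat) : nat :=
  match l with
  | [] => 0
  | x :: l' => S (cpair x (seqcode l'))
  end.

Definition is_booleans (A : PAS) (T F : carrier A) : Prop :=
  forall a b, app2 A T a b a /\ app2 A F a b b.

Definition is_pairing (A : PAS) (p : carrier A) : Prop :=
  (forall a b, exists c, app2 A p a b c) /\
  exists p0 p1 : carrier A, forall a b c, app2 A p a b c ->
     app A p0 c a /\ app A p1 c b.

(* f-dialogue between a and b, with u = seqcode l, l = [u_0;...;u_{n-1}] *)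
Definition dialogue (T F p : nat) (f : nat -> option nat) (a b : nat)
  (l : list nat) : Prop :=
  forall i, i < length l ->
    exists v w, app K1 a (seqcode (b :: firstn i l)) w /\
                app2 K1 p F v w /\ f v = Some (nth i l 0).

Definition app_rel (T F p : nat) (f : nat -> option nat) (a b c : nat) : Prop :=
  exists l w, dialogue T F p f a b l /\
              app K1 a (seqcode (b :: l)) w /\ app2 K1 p T c w.

Definition K1rel (T F p : nat) (f : nat -> option nat) : PAS :=
  {| carrier := nat; app := app_rel T F p f |}.

(* Main.v *)
Require Import Defs.
From Stdlib Require Import Arith List Cantor Lia.
Import ListNotations.


Definition p1 (n : nat) : nat := fst (Cantor.of_nat n).
Definition p2 (n : nat) : nat := snd (Cantor.of_nat n).
Arguments p1 : simpl never.
Arguments p2 : simpl never.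
Arguments cpair : simpl never.

Lemma p1_cp a b : p1 (cpair a b) = a.
Proof. unfold p1, cpair. now rewrite Cantor.cancel_of_to. Qed.
Lemma p2_cp a b : p2 (cpair a b) = b.
Proof. unfold p2, cpair. now rewrite Cantor.cancel_of_to. Qed.
Lemma cp_p n : cpair (p1 n) (p2 n) = n.
Proof. unfold p1, p2, cpair. rewrite <- (Cantor.cancel_to_of n) at 3.
  destruct (Cantor.of_nat n); reflexivity. Qed.
Lemma cp_ge a b : a + b <= cpair a b.
Proof. unfold cpair. pose proof (Cantor.to_nat_non_decreasing a b). lia. Qed.
Lemma p1_le n : p1 n <= n.
Proof. rewrite <- (cp_p n) at 2. pose proof (cp_ge (p1 n) (p2 n)). lia. Qed.
Lemma p2_le n : p2 n <= n.
Proof. rewrite <- (cp_p n) at 2. pose proof (cp_ge (p1 n) (p2 n)). lia. Qed.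
Lemma of_nat_p n : Cantor.of_nat n = (p1 n, p2 n).
Proof. unfold p1, p2. destruct (Cantor.of_nat n); reflexivity. Qed.
Lemma of_nat_cp a b : Cantor.of_nat (cpair a b) = (a, b).
Proof. unfold cpair. apply Cantor.cancel_of_to. Qed.

Lemma decode_fuel_eq : forall k1 k2 n, n < k1 -> n < k2 -> decode_fuel k1 n = decode_fuel k2 n.
Proof.
  induction k1; intros k2 n H1 H2; [lia|]. destruct k2; [lia|].
  destruct n; [reflexivity|]. cbn [decode_fuel].
  assert (Hq : n / 10 <= n) by (apply Nat.Div0.div_le_upper_bound; lia).
  pose proof (p1_le (n/10)) as Ha. pose proof (p2_le (n/10)) as Hb.
  unfold p1, p2 in *. cbv zeta.
  rewrite (IHk1 k2 (fst (Cantor.of_nat (n/10)))) by lia.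
  rewrite (IHk1 k2 (snd (Cantor.of_nat (n/10)))) by lia.
  rewrite (IHk1 k2 (n/10)) by lia. reflexivity.
Qed.

Lemma decode_fuel_decode k n : n < k -> decode_fuel k n = decode n.
Proof. intros. unfold decode. apply decode_fuel_eq; lia. Qed.

Lemma decode_fuel_SS k m : decode_fuel (S k) (S m) =
  match m mod 10 with
      | 0 => cZero
      | 1 => cSucc
      | 2 => cId
      | 3 => cFst
      | 4 => cSnd
      | 5 => cOracle
      | 6 => cPair (decode_fuel k (p1 (m/10))) (decode_fuel k (p2 (m/10)))
      | 7 => cComp (decode_fuel k (p1 (m/10))) (decode_fuel k (p2 (m/10)))
      | 8 => cRec (decode_fuel k (p1 (m/10))) (decode_fuel k (p2 (m/10)))
      | _ => cMu (decode_fuel k (m/10))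
  end.
Proof. reflexivity. Qed.

Lemma decode_S m : decode (S m) =
  match m mod 10 with
      | 0 => cZero
      | 1 => cSucc
      | 2 => cId
      | 3 => cFst
      | 4 => cSnd
      | 5 => cOracle
      | 6 => cPair (decode (p1 (m/10))) (decode (p2 (m/10)))
      | 7 => cComp (decode (p1 (m/10))) (decode (p2 (m/10)))
      | 8 => cRec (decode (p1 (m/10))) (decode (p2 (m/10)))
      | _ => cMu (decode (m/10))
  end.
Proof.
  unfold decode at 1. rewrite decode_fuel_SS.
  assert (Hq : m / 10 <= m) by (apply Nat.Div0.div_le_upper_bound; lia).
  pose proof (p1_le (m/10)) as Ha. pose proof (p2_le (m/10)) as Hb.
  rewrite !(decode_fuel_decode (S m)) by lia. reflexivity.
Qed.

Lemma decode_10 q t : t < 10 -> decode (S (10 * q + t)) =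
  match t with
      | 0 => cZero
      | 1 => cSucc
      | 2 => cId
      | 3 => cFst
      | 4 => cSnd
      | 5 => cOracle
      | 6 => cPair (decode (p1 q)) (decode (p2 q))
      | 7 => cComp (decode (p1 q)) (decode (p2 q))
      | 8 => cRec (decode (p1 q)) (decode (p2 q))
      | _ => cMu (decode q)
  end.
Proof.
  intros Ht. rewrite decode_S.
  replace ((10 * q + t) mod 10) with t.
  2:{ rewrite Nat.add_comm, Nat.mul_comm, Nat.Div0.mod_add. now rewrite Nat.mod_small. }
  replace ((10 * q + t) / 10) with q. reflexivity.
  rewrite Nat.add_comm, Nat.mul_comm, Nat.div_add by lia. rewrite Nat.div_small by lia. lia.
Qed.

Fixpoint encode (c : code) : nat :=
  match c with
  | cZero => 0 | cSucc => 2 | cId => 3 | cFst => 4 | cSnd => 5 | cOracle => 6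
  | cPair F G => S (10 * cpair (encode F) (encode G) + 6)
  | cComp F G => S (10 * cpair (encode F) (encode G) + 7)
  | cRec F G => S (10 * cpair (encode F) (encode G) + 8)
  | cMu F => S (10 * encode F + 9)
  end.

Lemma decode_pair n1 n2 : decode (S (10 * cpair n1 n2 + 6)) = cPair (decode n1) (decode n2).
Proof. rewrite decode_10 by lia. now rewrite p1_cp, p2_cp. Qed.
Lemma decode_comp n1 n2 : decode (S (10 * cpair n1 n2 + 7)) = cComp (decode n1) (decode n2).
Proof. rewrite decode_10 by lia. now rewrite p1_cp, p2_cp. Qed.
Lemma decode_rec n1 n2 : decode (S (10 * cpair n1 n2 + 8)) = cRec (decode n1) (decode n2).
Proof. rewrite decode_10 by lia. now rewrite p1_cp, p2_cp. Qed.
Lemma decode_mu n1 : decode (S (10 * n1 + 9)) = cMu (decode n1).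
Proof. rewrite decode_10 by lia. reflexivity. Qed.

Lemma decode_encode c : decode (encode c) = c.
Proof.
  induction c; try reflexivity; cbn [encode];
  rewrite ?decode_pair, ?decode_comp, ?decode_rec, ?decode_mu; congruence.
Qed.


Section Ind.
Variable f : nat -> option nat.
Variable P : code -> nat -> nat -> Prop.
Hypothesis Hzero : forall x, P cZero x 0.
Hypothesis Hsucc : forall x, P cSucc x (S x).
Hypothesis Hid : forall x, P cId x x.
Hypothesis Hfst : forall x, P cFst x (fst (Cantor.of_nat x)).
Hypothesis Hsnd : forall x, P cSnd x (snd (Cantor.of_nat x)).
Hypothesis Horacle : forall x y, f x = Some y -> P cOracle x y.
Hypothesis Hpair : forall F G x y z, eval f F x y -> P F x y -> eval f G x z -> P G x z ->
  P (cPair F G) x (cpair y z).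
Hypothesis Hcomp : forall F G x y z, eval f G x y -> P G x y -> eval f F y z -> P F y z ->
  P (cComp F G) x z.
Hypothesis Hrec0 : forall F G x z y, Cantor.of_nat z = (x, 0) -> eval f F x y -> P F x y ->
  P (cRec F G) z y.
Hypothesis HrecS : forall F G x n z w y, Cantor.of_nat z = (x, S n) ->
    eval f (cRec F G) (cpair x n) w -> P (cRec F G) (cpair x n) w ->
    eval f G (cpair (cpair x n) w) y -> P G (cpair (cpair x n) w) y -> P (cRec F G) z y.
Hypothesis Hmu : forall F x n, eval f F (cpair x n) 0 -> P F (cpair x n) 0 ->
    (forall m, m < n -> exists k, eval f F (cpair x m) (S k) /\ P F (cpair x m) (S k)) ->
    P (cMu F) x n.

Fixpoint eval_ind2 c x y (H : eval f c x y) {struct H} : P c x y.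
Proof.
  destruct H.
  - apply Hzero.
  - apply Hsucc.
  - apply Hid.
  - apply Hfst.
  - apply Hsnd.
  - now apply Horacle.
  - apply Hpair; auto.
  - eapply Hcomp; eauto.
  - eapply Hrec0; eauto.
  - eapply HrecS; eauto.
  - apply Hmu; auto. intros m Hm. destruct (H0 m Hm) as [k Hk].
    exists k. split; [exact Hk| apply (eval_ind2 _ _ _ Hk)].
Defined.
End Ind.

Lemma eval_det f c x y1 : eval f c x y1 -> forall y2, eval f c x y2 -> y1 = y2.
Proof.
  intro H. induction H using eval_ind2; intros y2 H2; inversion H2; subst; auto.
  all: try congruence.
  all: try (match goal with IH : forall y2, eval _ ?G ?a y2 -> ?w = y2,
     Hw : eval _ ?G ?a ?w2 |- _ => assert (w = w2) by auto; subst; auto; fail end).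
  all: try (match goal with Ha : Cantor.of_nat ?z = _, Hb : Cantor.of_nat ?z = _ |- _ =>
        rewrite Ha in Hb; injection Hb; intros; subst end; first [discriminate | auto]).
  all: try (match goal with IH : forall y2, eval _ (cRec ?F ?G) ?a y2 -> ?w = y2,
     Hw : eval _ (cRec ?F ?G) ?a ?w2 |- _ => assert (w = w2) by auto; subst; auto end).
  - destruct (Nat.lt_trichotomy n y2) as [Hl|[He|Hl]]; auto.
    + match goal with Hm : forall m, m < y2 -> _ |- _ => destruct (Hm n Hl) as [k Hk] end.
      specialize (IHeval _ Hk). discriminate.
    + match goal with Hm : forall m, m < n -> exists k, _ /\ _ |- _ => destruct (Hm y2 Hl) as [k [_ Hk]] end.
      match goal with H0 : eval _ _ (cpair x y2) 0 |- _ => specialize (Hk _ H0) end. discriminate.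
Qed.



Lemma eval_mono f c x y : eval (fun _ => None) c x y -> eval f c x y.
Proof.
  intro H. induction H using eval_ind2; try (econstructor; eauto; fail).
  - discriminate.
  - constructor; auto. intros m Hm.
    match goal with Hh : forall m, m < n -> _ |- _ => destruct (Hh m Hm) as [k [_ Hk]] end. eauto.
Qed.


Definition computes (C : code) (g : nat -> nat) := forall f x, eval f C x (g x).

Lemma ev_fst' f a b : eval f cFst (cpair a b) a.
Proof. pose proof (ev_fst f (cpair a b)). rewrite of_nat_cp in H. exact H. Qed.
Lemma ev_snd' f a b : eval f cSnd (cpair a b) b.
Proof. pose proof (ev_snd f (cpair a b)). rewrite of_nat_cp in H. exact H. Qed.
Lemma ev_p1 f x : eval f cFst x (p1 x).
Proof. apply ev_fst. Qed.
Lemma ev_p2 f x : eval f cSnd x (p2 x).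
Proof. apply ev_snd. Qed.

Lemma eval_rec_iter f F G x n (hs : nat -> nat) :
  eval f F x (hs 0) ->
  (forall k, k < n -> eval f G (cpair (cpair x k) (hs k)) (hs (S k))) ->
  eval f (cRec F G) (cpair x n) (hs n).
Proof.
  intros H0 HS. induction n.
  - eapply ev_rec0; [apply of_nat_cp| exact H0].
  - eapply ev_recS; [apply of_nat_cp| apply IHn; auto | apply HS; lia].
Qed.

Definition Ifz t A B := cComp (cRec A (cComp B (cComp cFst cFst))) (cPair cId t).

Lemma ifz_0 f t A B x y : eval f t x 0 -> eval f A x y -> eval f (Ifz t A B) x y.
Proof.
  intros Ht HA. eapply ev_comp. apply ev_pair; [apply ev_id| exact Ht].
  apply (eval_rec_iter f A _ x 0 (fun _ => y)); auto. intros; lia.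
Qed.

Lemma ifz_S f t A B x k ya y : eval f t x (S k) -> eval f A x ya -> eval f B x y ->
  eval f (Ifz t A B) x y.
Proof.
  intros Ht HA HB. eapply ev_comp. apply ev_pair; [apply ev_id| exact Ht].
  apply (eval_rec_iter f A _ x (S k) (fun j => match j with 0 => ya | S _ => y end)); auto.
  intros j _. eapply ev_comp; [| exact HB].
  eapply ev_comp; [apply ev_fst'| apply ev_fst'].
Qed.

Definition predC := cComp (cRec cZero (cComp cSnd cFst)) (cPair cZero cId).
Lemma predC_ok : computes predC pred.
Proof.
  intros f x. eapply ev_comp. apply ev_pair; [apply ev_zero| apply ev_id].
  apply (eval_rec_iter f _ _ 0 x pred). apply ev_zero.
  intros k _. eapply ev_comp; [apply ev_fst'| apply ev_snd'].
Qed.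

Definition addC := cRec cId (cComp cSucc cSnd).
Lemma addC_ok : computes addC (fun z => p1 z + p2 z).
Proof.
  intros f z. rewrite <- (cp_p z) at 1.
  apply (eval_rec_iter f _ _ (p1 z) (p2 z) (fun j => p1 z + j)).
  rewrite Nat.add_0_r. apply ev_id.
  intros k _. eapply ev_comp; [apply ev_snd'|]. rewrite Nat.add_succ_r. apply ev_succ.
Qed.

Definition subC := cRec cId (cComp predC cSnd).
Lemma subC_ok : computes subC (fun z => p1 z - p2 z).
Proof.
  intros f z. rewrite <- (cp_p z) at 1.
  apply (eval_rec_iter f _ _ (p1 z) (p2 z) (fun j => p1 z - j)).
  rewrite Nat.sub_0_r. apply ev_id.
  intros k _. eapply ev_comp; [apply ev_snd'|]. replace (p1 z - S k) with (pred (p1 z - k)) by lia.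
  apply predC_ok.
Qed.

Definition constC (n : nat) : code := Nat.iter n (cComp cSucc) cZero.
Lemma constC_ok n : computes (constC n) (fun _ => n).
Proof.
  intros f x. induction n; simpl. apply ev_zero. eapply ev_comp; [exact IHn| apply ev_succ].
Qed.

Definition eqbC := Ifz (cComp addC (cPair subC (cComp subC (cPair cSnd cFst)))) cZero (constC 1).
Lemma eqbC_ok : computes eqbC (fun z => if p1 z =? p2 z then 0 else 1).
Proof.
  intros f z.
  assert (Ht : eval f (cComp addC (cPair subC (cComp subC (cPair cSnd cFst)))) z
     ((p1 z - p2 z) + (p2 z - p1 z))).
  { eapply ev_comp. apply ev_pair. apply subC_ok. eapply ev_comp.
    apply ev_pair; [apply ev_p2| apply ev_p1]. apply subC_ok.
    pose proof (addC_ok f (cpair (p1 z - p2 z) (p1 (cpair (p2 z) (p1 z)) - p2 (cpair (p2 z) (p1 z))))) as Ha.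
    rewrite p1_cp, p2_cp in Ha. rewrite !p1_cp, !p2_cp in Ha. rewrite !p1_cp, !p2_cp. exact Ha. }
  destruct (p1 z =? p2 z) eqn:E.
  - apply Nat.eqb_eq in E. apply ifz_0. rewrite E, Nat.sub_diag in Ht. exact Ht. apply ev_zero.
  - apply Nat.eqb_neq in E. destruct ((p1 z - p2 z) + (p2 z - p1 z)) eqn:E2; [lia|].
    eapply ifz_S; [exact Ht| apply ev_zero| apply constC_ok].
Qed.

Definition s10 := Nat.iter 10 (cComp cSucc) cId.
Definition mul10C := cComp (cRec cZero (cComp s10 cSnd)) (cPair cZero cId).
Lemma mul10C_ok : computes mul10C (fun n => 10 * n).
Proof.
  intros f x. eapply ev_comp. apply ev_pair; [apply ev_zero| apply ev_id].
  apply (eval_rec_iter f _ _ 0 x (fun j => 10 * j)). apply ev_zero.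
  intros k _. eapply ev_comp; [apply ev_snd'|].
  replace (10 * S k) with (S (S (S (S (S (S (S (S (S (S (10 * k)))))))))))  by lia.
  unfold s10. simpl Nat.iter. repeat (eapply ev_comp; [| apply ev_succ]). apply ev_id.
Qed.

Lemma dm_step j : (if j mod 10 =? 9 then (S (j/10), 0) else (j/10, S (j mod 10))) = (S j / 10, S j mod 10).
Proof.
  pose proof (Nat.div_mod j 10 ltac:(lia)). pose proof (Nat.mod_upper_bound j 10 ltac:(lia)).
  destruct (j mod 10 =? 9) eqn:E.
  - apply Nat.eqb_eq in E. f_equal.
    + apply (Nat.div_unique _ _ _ 0); lia.
    + apply (Nat.mod_unique _ _ (S (j/10))); lia.
  - apply Nat.eqb_neq in E. f_equal.
    + apply (Nat.div_unique _ _ _ (S (j mod 10))); lia.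
    + apply (Nat.mod_unique _ _ (j/10)); lia.
Qed.

Definition dmstep := Ifz (cComp eqbC (cPair cSnd (constC 9))) (cPair (cComp cSucc cFst) cZero)
   (cPair cFst (cComp cSucc cSnd)).
Definition dmC := cComp (cRec (cPair cZero cZero) (cComp dmstep cSnd)) (cPair cZero cId).
Lemma dmC_ok : computes dmC (fun n => cpair (n / 10) (n mod 10)).
Proof.
  intros f x. eapply ev_comp. apply ev_pair; [apply ev_zero| apply ev_id].
  apply (eval_rec_iter f _ _ 0 x (fun j => cpair (j / 10) (j mod 10))).
  apply ev_pair; apply ev_zero.
  intros k _. eapply ev_comp; [apply ev_snd'|].
  pose proof (dm_step k) as Hs.
  assert (He : eval f (cComp eqbC (cPair cSnd (constC 9))) (cpair (k/10) (k mod 10))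
     (if k mod 10 =? 9 then 0 else 1)).
  { eapply ev_comp. apply ev_pair; [apply ev_snd'| apply constC_ok].
    pose proof (eqbC_ok f (cpair (k mod 10) 9)). cbv beta in H. rewrite p1_cp, p2_cp in H. exact H. }
  assert (Hc : cpair (S k / 10) (S k mod 10) = if k mod 10 =? 9 then cpair (S (k/10)) 0 else cpair (k/10) (S (k mod 10))).
  { unfold cpair. rewrite <- Hs. destruct (_ =? _); reflexivity. }
  cbv beta. rewrite Hc. clear Hs Hc.
  destruct (k mod 10 =? 9) eqn:E.
  - apply ifz_0; [exact He|]. apply ev_pair; [eapply ev_comp; [apply ev_fst'| apply ev_succ]| apply ev_zero].
  - eapply ifz_S; [exact He| |].
    + apply ev_pair; [eapply ev_comp; [apply ev_fst'| apply ev_succ]| apply ev_zero].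
    + apply ev_pair; [apply ev_fst'| eapply ev_comp; [apply ev_snd'| apply ev_succ]].
Qed.


Inductive ex : Type :=
| EVar | EZero | ESucc (e : ex) | EP1 (e : ex) | EP2 (e : ex) | EPair (a b : ex)
| EIfz (t a b : ex) | EPred (e : ex) | EAdd (a b : ex) | ESub (a b : ex) | EEqb (a b : ex)
| EDiv10 (e : ex) | EMod10 (e : ex) | EMul10 (e : ex) | EIter (s i n : ex).

Fixpoint den (e : ex) (x : nat) : nat :=
  match e with
  | EVar => x
  | EZero => 0
  | ESucc e => S (den e x)
  | EP1 e => p1 (den e x)
  | EP2 e => p2 (den e x)
  | EPair a b => cpair (den a x) (den b x)
  | EIfz t a b => match den t x with 0 => den a x | S _ => den b x end
  | EPred e => pred (den e x)
  | EAdd a b => den a x + den b x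
  | ESub a b => den a x - den b x
  | EEqb a b => if den a x =? den b x then 0 else 1
  | EDiv10 e => den e x / 10
  | EMod10 e => den e x mod 10
  | EMul10 e => 10 * den e x
  | EIter s i n => Nat.iter (den n x) (den s) (den i x)
  end.

Fixpoint compile (e : ex) : code :=
  match e with
  | EVar => cId
  | EZero => cZero
  | ESucc e => cComp cSucc (compile e)
  | EP1 e => cComp cFst (compile e)
  | EP2 e => cComp cSnd (compile e)
  | EPair a b => cPair (compile a) (compile b)
  | EIfz t a b => Ifz (compile t) (compile a) (compile b)
  | EPred e => cComp predC (compile e)
  | EAdd a b => cComp addC (cPair (compile a) (compile b))
  | ESub a b => cComp subC (cPair (compile a) (compile b))
  | EEqb a b => cComp eqbC (cPair (compile a) (compile b))
  | EDiv10 e => cComp cFst (cComp dmC (compile e))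
  | EMod10 e => cComp cSnd (cComp dmC (compile e))
  | EMul10 e => cComp mul10C (compile e)
  | EIter s i n => cComp (cRec (compile i) (cComp (compile s) cSnd)) (cPair cId (compile n))
  end.

Lemma compile_ok e : computes (compile e) (den e).
Proof.
  induction e; intros f x; simpl.
  - apply ev_id.
  - apply ev_zero.
  - eapply ev_comp; [apply IHe| apply ev_succ].
  - eapply ev_comp; [apply IHe| apply ev_p1].
  - eapply ev_comp; [apply IHe| apply ev_p2].
  - apply ev_pair; auto.
  - destruct (den e1 x) eqn:E.
    + apply ifz_0; auto. rewrite <- E. auto.
    + eapply ifz_S; [rewrite <- E; apply IHe1| apply IHe2| apply IHe3].
  - eapply ev_comp; [apply IHe| apply predC_ok].
  - eapply ev_comp; [apply ev_pair; [apply IHe1| apply IHe2]|].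
    pose proof (addC_ok f (cpair (den e1 x) (den e2 x))). cbv beta in H. rewrite p1_cp, p2_cp in H. exact H.
  - eapply ev_comp; [apply ev_pair; [apply IHe1| apply IHe2]|].
    pose proof (subC_ok f (cpair (den e1 x) (den e2 x))). cbv beta in H. rewrite p1_cp, p2_cp in H. exact H.
  - eapply ev_comp; [apply ev_pair; [apply IHe1| apply IHe2]|].
    pose proof (eqbC_ok f (cpair (den e1 x) (den e2 x))). cbv beta in H. rewrite p1_cp, p2_cp in H. exact H.
  - eapply ev_comp; [eapply ev_comp; [apply IHe| apply dmC_ok]| apply ev_fst'].
  - eapply ev_comp; [eapply ev_comp; [apply IHe| apply dmC_ok]| apply ev_snd'].
  - eapply ev_comp; [apply IHe| apply mul10C_ok].
  - eapply ev_comp; [apply ev_pair; [apply ev_id| apply IHe3]|].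
    apply (eval_rec_iter f _ _ x (den e3 x) (fun j => Nat.iter j (den e1) (den e2 x))).
    apply IHe2. intros k _. eapply ev_comp; [apply ev_snd'| apply IHe1].
Qed.

Definition EConst (n : nat) : ex := Nat.iter n ESucc EZero.
Lemma den_const n x : den (EConst n) x = n.
Proof. induction n; simpl; auto. Qed.


Fixpoint switch (e : ex) (bs : list ex) (d : ex) : ex :=
  match bs with [] => d | b :: bs => EIfz e b (switch (EPred e) bs d) end.

Definition mkE t a k l := EPair (EConst t) (EPair a (EPair k l)).
Definition pushE fr k := ESucc (EPair fr k).
Definition frE ft d := EPair (EConst ft) d.

Definition sA := EP1 (EP2 EVar).
Definition sK := EP1 (EP2 (EP2 EVar)).
Definition sL := EP2 (EP2 (EP2 EVar)).

Definition evalE :=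
  let c := EP1 sA in let x := EP2 sA in let m := EPred c in
  let q := EDiv10 m in let t := EMod10 m in
  EIfz c (mkE 1 EZero sK sL) (switch t [
    mkE 1 EZero sK sL;
    mkE 1 (ESucc x) sK sL;
    mkE 1 x sK sL;
    mkE 1 (EP1 x) sK sL;
    mkE 1 (EP2 x) sK sL;
    EIfz sL (mkE 3 x sK sL) (mkE 1 (EP1 (EPred sL)) sK (EP2 (EPred sL)));
    mkE 0 (EPair (EP1 q) x) (pushE (frE 0 (EPair (EP2 q) x)) sK) sL;
    mkE 0 (EPair (EP2 q) x) (pushE (frE 2 (EP1 q)) sK) sL;
    mkE 0 (EPair (EP1 q) (EP1 x)) (pushE (frE 3 (EPair (EP2 q) (EPair (EP1 x) (EPair EZero (EP2 x))))) sK) sL]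
    (mkE 0 (EPair q (EPair x EZero)) (pushE (frE 4 (EPair q (EPair x EZero))) sK) sL)).

Definition retE :=
  let v := sA in let K' := EPred sK in let fr := EP1 K' in let Kr := EP2 K' in
  let ft := EP1 fr in let fd := EP2 fr in
  EIfz sK (mkE 2 v EZero sL) (switch ft [
    mkE 0 fd (pushE (frE 1 v) Kr) sL;
    mkE 1 (EPair fd v) Kr sL;
    mkE 0 (EPair fd v) Kr sL;
    (let G := EP1 fd in let x := EP1 (EP2 fd) in let n := EP1 (EP2 (EP2 fd)) in
     let N := EP2 (EP2 (EP2 fd)) in
     EIfz (EEqb n N) (mkE 1 v Kr sL)
       (mkE 0 (EPair G (EPair (EPair x n) v)) (pushE (frE 3 (EPair G (EPair x (EPair (ESucc n) N)))) Kr) sL))]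
    (let F := EP1 fd in let x := EP1 (EP2 fd) in let n := EP2 (EP2 fd) in
     EIfz v (mkE 1 n Kr sL)
       (mkE 0 (EPair F (EPair x (ESucc n))) (pushE (frE 4 (EPair F (EPair x (ESucc n)))) Kr) sL))).

Definition stepE := switch (EP1 EVar) [evalE; retE] EVar.
Definition step := den stepE.

Definition mk t a k l := cpair t (cpair a (cpair k l)).
Definition push fr k := S (cpair fr k).
Definition fPair1 G x := cpair 0 (cpair G x).
Definition fPair2 y := cpair 1 y.
Definition fComp F := cpair 2 F.
Definition fRec G x n N := cpair 3 (cpair G (cpair x (cpair n N))).
Definition fMu F x n := cpair 4 (cpair F (cpair x n)).

Ltac stp := unfold step, stepE, evalE, retE, mkE, pushE, frE, sA, sK, sL, mk, push,
   fPair1, fPair2, fComp, fRec, fMu; cbn [den switch EConst Nat.iter];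
   repeat progress (rewrite ?p1_cp, ?p2_cp; cbn [den switch EConst Nat.iter pred]).

Lemma S_ret_nil v L : step (mk 1 v 0 L) = mk 2 v 0 L.
Proof. stp. reflexivity. Qed.
Lemma S_pair1 v G x K L : step (mk 1 v (push (fPair1 G x) K) L) = mk 0 (cpair G x) (push (fPair2 v) K) L.
Proof. stp. reflexivity. Qed.
Lemma S_pair2 v y K L : step (mk 1 v (push (fPair2 y) K) L) = mk 1 (cpair y v) K L.
Proof. stp. reflexivity. Qed.
Lemma S_comp v F K L : step (mk 1 v (push (fComp F) K) L) = mk 0 (cpair F v) K L.
Proof. stp. reflexivity. Qed.
Lemma S_recdone v G x n K L : step (mk 1 v (push (fRec G x n n) K) L) = mk 1 v K L.
Proof. stp. rewrite Nat.eqb_refl. reflexivity. Qed.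
Lemma S_recnext v G x n N K L : n <> N -> step (mk 1 v (push (fRec G x n N) K) L) =
  mk 0 (cpair G (cpair (cpair x n) v)) (push (fRec G x (S n) N) K) L.
Proof. intro H. stp. apply Nat.eqb_neq in H. rewrite H. reflexivity. Qed.
Lemma S_mu0 F x n K L : step (mk 1 0 (push (fMu F x n) K) L) = mk 1 n K L.
Proof. stp. reflexivity. Qed.
Lemma S_muS k F x n K L : step (mk 1 (S k) (push (fMu F x n) K) L) =
  mk 0 (cpair F (cpair x (S n))) (push (fMu F x (S n)) K) L.
Proof. stp. reflexivity. Qed.
Lemma S_halt t a k l : 2 <= t -> step (mk t a k l) = mk t a k l.
Proof. intro H. do 2 (destruct t; [lia|]). stp. reflexivity. Qed.
Lemma S_eval0 x K L : step (mk 0 (cpair 0 x) K L) = mk 1 0 K L.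
Proof. stp. reflexivity. Qed.
Lemma S_evalS m x K L : step (mk 0 (cpair (S m) x) K L) =
  match m mod 10 with
  | 0 => mk 1 0 K L
  | 1 => mk 1 (S x) K L
  | 2 => mk 1 x K L
  | 3 => mk 1 (p1 x) K L
  | 4 => mk 1 (p2 x) K L
  | 5 => match L with 0 => mk 3 x K L | S L' => mk 1 (p1 L') K (p2 L') end
  | 6 => mk 0 (cpair (p1 (m/10)) x) (push (fPair1 (p2 (m/10)) x) K) L
  | 7 => mk 0 (cpair (p2 (m/10)) x) (push (fComp (p1 (m/10))) K) L
  | 8 => mk 0 (cpair (p1 (m/10)) (p1 x)) (push (fRec (p2 (m/10)) (p1 x) 0 (p2 x)) K) L
  | _ => mk 0 (cpair (m/10) (cpair x 0)) (push (fMu (m/10) x 0) K) L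
  end.
Proof.
  stp. destruct (m mod 10) as [|[|[|[|[|[|[|[|[|]]]]]]]]]; cbn [den pred]; try reflexivity.
  destruct L; reflexivity.
Qed.


Definition reach s s' := exists n, Nat.iter n step s = s'.
Lemma reach_refl s : reach s s.
Proof. exists 0. reflexivity. Qed.
Lemma reach_trans s1 s2 s3 : reach s1 s2 -> reach s2 s3 -> reach s1 s3.
Proof. intros [a Ha] [b Hb]. exists (b + a). rewrite Nat.iter_add. congruence. Qed.
Lemma reach_step s1 s2 s3 : step s1 = s2 -> reach s2 s3 -> reach s1 s3.
Proof. intros H1 H2. apply (reach_trans _ s2); auto. exists 1. simpl. auto. Qed.

Definition ans (tr : list (nat * nat)) := map snd tr.
Definition RunP (s0 s1 : nat -> nat) tr :=
  forall L, reach (s0 (seqcode (ans tr ++ L))) (s1 (seqcode L)).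
Definition PrefixP (s0 : nat -> nat) (tr : list (nat * nat)) :=
  forall i, i < length tr -> exists K' L',
    reach (s0 (seqcode (ans (firstn i tr)))) (mk 3 (fst (nth i tr (0,0))) K' L').

Lemma run_app s0 s1 s2 tr1 tr2 : RunP s0 s1 tr1 -> RunP s1 s2 tr2 -> RunP s0 s2 (tr1 ++ tr2).
Proof.
  intros H1 H2 L. unfold ans. rewrite map_app, <- app_assoc.
  eapply reach_trans; [apply H1| apply H2].
Qed.

Lemma pre_app s0 s1 tr1 tr2 : RunP s0 s1 tr1 -> PrefixP s0 tr1 -> PrefixP s1 tr2 ->
  PrefixP s0 (tr1 ++ tr2).
Proof.
  intros H1 P1 P2 i Hi. rewrite length_app in Hi.
  destruct (Nat.lt_ge_cases i (length tr1)) as [Hl|Hl].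
  - rewrite firstn_app. replace (i - length tr1) with 0 by lia. simpl.
    rewrite app_nth1 by lia. rewrite app_nil_r. apply P1; auto.
  - rewrite firstn_app, firstn_all2 by lia. rewrite app_nth2 by lia.
    destruct (P2 (i - length tr1)) as [K' [L' HR]]; [lia|].
    exists K', L'. eapply reach_trans; [| exact HR].
    unfold ans. rewrite map_app. apply H1.
Qed.

Lemma run_step s0 s1 s2 tr : (forall L, step (s0 L) = s1 L) -> RunP s1 s2 tr -> RunP s0 s2 tr.
Proof. intros Hs H L. eapply reach_step; [apply Hs| apply H]. Qed.
Lemma pre_step s0 s1 tr : (forall L, step (s0 L) = s1 L) -> PrefixP s1 tr -> PrefixP s0 tr.
Proof. intros Hs H i Hi. destruct (H i Hi) as [K' [L' HR]]. exists K', L'.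
  eapply reach_step; [apply Hs| apply HR]. Qed.
Lemma run_nil s0 : RunP s0 s0 [].
Proof. intro L. apply reach_refl. Qed.
Lemma run_nil_step s0 s1 : (forall L, step (s0 L) = s1 L) -> RunP s0 s1 [].
Proof. intros Hs. eapply run_step; [exact Hs| apply run_nil]. Qed.
Lemma pre_nil s0 : PrefixP s0 [].
Proof. intros i Hi. simpl in Hi. lia. Qed.

Lemma E_zero cn x K L : decode cn = cZero -> step (mk 0 (cpair cn x) K L) = mk 1 0 K L.
Proof. intro H. destruct cn as [|m]; [apply S_eval0|].
  rewrite decode_S in H; rewrite S_evalS.
  destruct (m mod 10) as [|[|[|[|[|[|[|[|[|]]]]]]]]]; try discriminate H; reflexivity. Qed.

Ltac leaf cn := let H := fresh in let m := fresh in intro H; destruct cn as [|m]; [discriminate H|];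
  rewrite decode_S in H; rewrite S_evalS;
  destruct (m mod 10) as [|[|[|[|[|[|[|[|[|]]]]]]]]]; try discriminate H; reflexivity.

Lemma E_succ cn x K L : decode cn = cSucc -> step (mk 0 (cpair cn x) K L) = mk 1 (S x) K L.
Proof. leaf cn. Qed.
Lemma E_id cn x K L : decode cn = cId -> step (mk 0 (cpair cn x) K L) = mk 1 x K L.
Proof. leaf cn. Qed.
Lemma E_fst cn x K L : decode cn = cFst -> step (mk 0 (cpair cn x) K L) = mk 1 (p1 x) K L.
Proof. leaf cn. Qed.
Lemma E_snd cn x K L : decode cn = cSnd -> step (mk 0 (cpair cn x) K L) = mk 1 (p2 x) K L.
Proof. leaf cn. Qed.
Lemma E_oracle cn x K L : decode cn = cOracle -> step (mk 0 (cpair cn x) K L) =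
  match L with 0 => mk 3 x K L | S L' => mk 1 (p1 L') K (p2 L') end.
Proof. leaf cn. Qed.

Ltac node cn := let H := fresh in let m := fresh in let E := fresh in
  intro H; destruct cn as [|m]; [discriminate H|];
  rewrite decode_S in H;
  destruct (m mod 10) as [|[|[|[|[|[|[|[|[|]]]]]]]]] eqn:E; try discriminate H;
  injection H as <- <-; do 2 eexists; split; [reflexivity|]; split; [reflexivity|];
  intros; rewrite S_evalS, E; reflexivity.

Lemma E_pair cn F G : decode cn = cPair F G -> exists Fn Gn, decode Fn = F /\ decode Gn = G /\
  forall x K L, step (mk 0 (cpair cn x) K L) = mk 0 (cpair Fn x) (push (fPair1 Gn x) K) L.
Proof. node cn. Qed.
Lemma E_comp cn F G : decode cn = cComp F G -> exists Fn Gn, decode Fn = F /\ decode Gn = G /\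
  forall x K L, step (mk 0 (cpair cn x) K L) = mk 0 (cpair Gn x) (push (fComp Fn) K) L.
Proof. node cn. Qed.
Lemma E_rec cn F G : decode cn = cRec F G -> exists Fn Gn, decode Fn = F /\ decode Gn = G /\
  forall x K L, step (mk 0 (cpair cn x) K L) = mk 0 (cpair Fn (p1 x)) (push (fRec Gn (p1 x) 0 (p2 x)) K) L.
Proof. node cn. Qed.
Lemma E_mu cn F : decode cn = cMu F -> exists Fn, decode Fn = F /\
  forall x K L, step (mk 0 (cpair cn x) K L) = mk 0 (cpair Fn (cpair x 0)) (push (fMu Fn x 0) K) L.
Proof. intro H; destruct cn as [|m]; [discriminate H|].
  rewrite decode_S in H.
  destruct (m mod 10) as [|[|[|[|[|[|[|[|[|]]]]]]]]] eqn:E; try discriminate H.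
  injection H as <-. eexists; split; [reflexivity|]. intros; rewrite S_evalS, E; reflexivity. Qed.


Definition trOK (f : nat -> option nat) (tr : list (nat * nat)) :=
  Forall (fun vu : nat * nat => f (fst vu) = Some (snd vu)) tr.
Definition SimA tr cn x y := forall K, RunP (fun L => mk 0 (cpair cn x) K L) (fun L => mk 1 y K L) tr.
Definition SimB tr cn x := forall K, PrefixP (fun L => mk 0 (cpair cn x) K L) tr.
Definition SimRec tr Fn Gn x0 n y := forall N, n <= N -> forall K,
  RunP (fun L => mk 0 (cpair Fn x0) (push (fRec Gn x0 0 N) K) L)
       (fun L => mk 1 y (push (fRec Gn x0 n N) K) L) tr /\
  PrefixP (fun L => mk 0 (cpair Fn x0) (push (fRec Gn x0 0 N) K) L) tr.

Definition Mot f c x y := exists tr, trOK f tr /\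
  (forall cn, decode cn = c -> SimA tr cn x y /\ SimB tr cn x) /\
  (forall F G Fn Gn, c = cRec F G -> decode Fn = F -> decode Gn = G ->
     SimRec tr Fn Gn (p1 x) (p2 x) y).

Lemma rec_from_loop tr F G z y :
  (forall Fn Gn, decode Fn = F -> decode Gn = G -> SimRec tr Fn Gn (p1 z) (p2 z) y) ->
  forall cn, decode cn = cRec F G -> SimA tr cn z y /\ SimB tr cn z.
Proof.
  intros H cn Hc. destruct (E_rec cn F G Hc) as [Fn [Gn [HF [HG Hs]]]].
  split; intro K; destruct (H Fn Gn HF HG (p2 z) (le_n _) K) as [HR HP].
  - rewrite <- (app_nil_r tr). eapply run_step; [intro; apply Hs|].
    eapply run_app; [apply HR|]. apply run_nil_step. intro; apply S_recdone.
  - eapply pre_step; [intro; apply Hs| apply HP].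
Qed.

Ltac leafcase E := exists []; split; [constructor|]; split;
  [ intros cn Hc; split; intro K; [apply run_nil_step; intro; apply E; exact Hc| apply pre_nil]
  | intros; discriminate ].

Theorem sim f c x y : eval f c x y -> Mot f c x y.
Proof.
  revert c x y. apply (eval_ind2 f (Mot f)).
  - intro x; leafcase E_zero.
  - intro x; leafcase E_succ.
  - intro x; leafcase E_id.
  - intro x; leafcase E_fst.
  - intro x; leafcase E_snd.
  - intros x y H.
    exists [(x, y)]. split; [constructor; auto|]. split; [|intros; discriminate].
    intros cn Hc. split; intro K.
    + intro L. simpl. eapply reach_step; [apply E_oracle; exact Hc|].
      rewrite p1_cp, p2_cp. apply reach_refl.
    + intros i Hi. simpl in Hi. assert (i = 0) by lia. subst. simpl.
      exists K, 0. eapply reach_step; [apply E_oracle; exact Hc| apply reach_refl].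
  - intros F G x y z _ IHeval _ IHeval0.
    destruct IHeval as [tr1 [ok1 [S1 _]]]. destruct IHeval0 as [tr2 [ok2 [S2 _]]].
    exists (tr1 ++ tr2). split; [apply Forall_app; auto|]. split; [|intros; discriminate].
    intros cn Hc. destruct (E_pair cn F G Hc) as [Fn [Gn [HF [HG Hs]]]].
    destruct (S1 Fn HF) as [A1 B1]. destruct (S2 Gn HG) as [A2 B2].
    split; intro K.
    + eapply run_step; [intro; apply Hs|]. rewrite <- (app_nil_r tr2), app_assoc.
      eapply run_app; [eapply run_app; [apply A1|]|].
      * eapply run_step; [intro; apply S_pair1| apply A2].
      * apply run_nil_step. intro; apply S_pair2.
    + eapply pre_step; [intro; apply Hs|]. eapply pre_app; [apply A1| apply B1|].
      eapply pre_step; [intro; apply S_pair1| apply B2].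
  - intros F G x y z _ IHeval _ IHeval0.
    destruct IHeval as [tr1 [ok1 [S1 _]]]. destruct IHeval0 as [tr2 [ok2 [S2 _]]].
    exists (tr1 ++ tr2). split; [apply Forall_app; auto|]. split; [|intros; discriminate].
    intros cn Hc. destruct (E_comp cn F G Hc) as [Fn [Gn [HF [HG Hs]]]].
    destruct (S1 Gn HG) as [A1 B1]. destruct (S2 Fn HF) as [A2 B2].
    split; intro K.
    + eapply run_step; [intro; apply Hs|].
      eapply run_app; [apply A1|].
      eapply run_step; [intro; apply S_comp| apply A2].
    + eapply pre_step; [intro; apply Hs|]. eapply pre_app; [apply A1| apply B1|].
      eapply pre_step; [intro; apply S_comp| apply B2].
  - intros F G x z y H _ IHeval.
    destruct IHeval as [tr [ok [S1 _]]].
    assert (Hx : p1 z = x /\ p2 z = 0) by (unfold p1, p2; rewrite H; auto). destruct Hx as [Hx1 Hx2].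
    assert (HR : forall Fn Gn, decode Fn = F -> decode Gn = G -> SimRec tr Fn Gn (p1 z) (p2 z) y).
    { intros Fn Gn HF HG N _ K. rewrite Hx1, Hx2. destruct (S1 Fn HF) as [A B]. split; [apply A| apply B]. }
    exists tr. split; [auto|]. split.
    + apply rec_from_loop. exact HR.
    + intros F' G' Fn Gn E. injection E as <- <-. apply HR.
  - intros F G x n z w y H _ IHeval _ IHeval0.
    destruct IHeval as [tr1 [ok1 [_ R1]]]. destruct IHeval0 as [tr2 [ok2 [S2 _]]].
    assert (Hx : p1 z = x /\ p2 z = S n) by (unfold p1, p2; rewrite H; auto). destruct Hx as [Hx1 Hx2].
    assert (HR : forall Fn Gn, decode Fn = F -> decode Gn = G -> SimRec (tr1 ++ tr2) Fn Gn (p1 z) (p2 z) y).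
    { intros Fn Gn HF HG N HN K. rewrite Hx1, Hx2 in *.
      specialize (R1 F G Fn Gn eq_refl HF HG). rewrite p1_cp, p2_cp in R1.
      destruct (R1 N ltac:(lia) K) as [A1 B1]. destruct (S2 Gn HG) as [A2 B2].
      split.
      - eapply run_app; [apply A1|]. eapply run_step; [intro; apply S_recnext; lia| apply A2].
      - eapply pre_app; [apply A1| apply B1|]. eapply pre_step; [intro; apply S_recnext; lia| apply B2]. }
    exists (tr1 ++ tr2). split; [apply Forall_app; auto|]. split.
    + apply rec_from_loop. exact HR.
    + intros F' G' Fn Gn E. injection E as <- <-. apply HR.
  - intros F x n _ IHeval H0.
    destruct IHeval as [tr0 [ok0 [S0 _]]].
    assert (Loop : forall j, j <= n -> exists trj, trOK f trj /\ forall Fn, decode Fn = F -> forall K,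
      RunP (fun L => mk 0 (cpair Fn (cpair x 0)) (push (fMu Fn x 0) K) L)
           (fun L => mk 0 (cpair Fn (cpair x j)) (push (fMu Fn x j) K) L) trj /\
      PrefixP (fun L => mk 0 (cpair Fn (cpair x 0)) (push (fMu Fn x 0) K) L) trj).
    { induction j; intros Hj.
      - exists []. split; [constructor|]. intros; split; [apply run_nil| apply pre_nil].
      - destruct IHj as [trj [okj Hj']]; [lia|].
        destruct (H0 j ltac:(lia)) as [k [_ [trm [okm [Sm _]]]]].
        exists (trj ++ trm). split; [apply Forall_app; auto|].
        intros Fn HF K. destruct (Hj' Fn HF K) as [A1 B1]. destruct (Sm Fn HF) as [A2 B2].
        split.
        + rewrite <- (app_nil_r trm), app_assoc. eapply run_app; [eapply run_app; [apply A1| apply A2]|].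
          apply run_nil_step. intro; apply S_muS.
        + eapply pre_app; [apply A1| apply B1| apply B2]. }
    destruct (Loop n (le_n _)) as [trn [okn Hn]].
    exists (trn ++ tr0). split; [apply Forall_app; auto|]. split; [|intros; discriminate].
    intros cn Hc. destruct (E_mu cn F Hc) as [Fn [HF Hs]].
    destruct (S0 Fn HF) as [A2 B2].
    split; intro K; destruct (Hn Fn HF K) as [A1 B1].
    + eapply run_step; [intro; apply Hs|]. rewrite <- (app_nil_r tr0), app_assoc.
      eapply run_app; [eapply run_app; [apply A1| apply A2]|].
      apply run_nil_step. intro; apply S_mu0.
    + eapply pre_step; [intro; apply Hs|]. eapply pre_app; [apply A1| apply B1| apply B2].
Qed.


Definition initE := mkE 0 (EPair (EP1 EVar) (EP1 (EP2 EVar))) EZero (EP2 (EP2 EVar)).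
Lemma den_init a x L : den initE (cpair a (cpair x L)) = mk 0 (cpair a x) 0 L.
Proof. unfold initE, mkE, mk. cbn [den]. rewrite !p1_cp, !p2_cp, !p1_cp, den_const. reflexivity. Qed.

Definition iterCode := cRec (compile initE) (cComp (compile stepE) cSnd).
Lemma iter_ok f z n : eval f iterCode (cpair z n) (Nat.iter n step (den initE z)).
Proof.
  apply (eval_rec_iter f _ _ z n (fun j => Nat.iter j step (den initE z))).
  apply compile_ok. intros k _. eapply ev_comp; [apply ev_snd'| apply compile_ok].
Qed.

Definition haltE := EIfz (ESub (EConst 2) (EP1 EVar)) EZero (EConst 1).
Definition Hc := cComp (compile haltE) iterCode.
Definition RunC := cComp iterCode (cPair cId (cMu Hc)).

Lemma halted_fix s : 2 <= p1 s -> step s = s.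
Proof. intro H. rewrite <- (cp_p s), <- (cp_p (p2 s)), <- (cp_p (p2 (p2 s))).
  fold (mk (p1 s) (p1 (p2 s)) (p1 (p2 (p2 s))) (p2 (p2 (p2 s)))). apply S_halt. auto. Qed.

Lemma iter_fix n s : step s = s -> Nat.iter n step s = s.
Proof. intro H. induction n; simpl; congruence. Qed.

Lemma least_ex (P : nat -> bool) k : P k = true -> exists N, P N = true /\ forall m, m < N -> P m = false.
Proof.
  revert P. induction k; intros P Hk.
  - exists 0. split; auto. intros; lia.
  - destruct (P 0) eqn:E0.
    + exists 0. split; auto. intros; lia.
    + destruct (IHk (fun n => P (S n)) Hk) as [N [HN Hm]]. exists (S N). split; auto.
      intros [|m] Hlt; auto. apply Hm. lia.
Qed.

Lemma run_ok f z s : reach (den initE z) s -> 2 <= p1 s -> eval f RunC z s.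
Proof.
  intros [k Hk] Hs.
  destruct (least_ex (fun n => 2 <=? p1 (Nat.iter n step (den initE z))) k) as [N [HN Hm]].
  { rewrite Hk. apply Nat.leb_le. auto. }
  apply Nat.leb_le in HN.
  assert (HsN : Nat.iter N step (den initE z) = s).
  { assert (N <= k).
    { destruct (Nat.le_gt_cases N k); auto. specialize (Hm k H). rewrite Hk in Hm.
      apply Nat.leb_gt in Hm. lia. }
    rewrite <- Hk. replace k with ((k - N) + N) by lia. rewrite Nat.iter_add.
    symmetry. apply iter_fix. apply halted_fix. auto. }
  unfold RunC. eapply ev_comp; [apply ev_pair; [apply ev_id|]|].
  2: { rewrite <- HsN. apply iter_ok. }
  apply ev_mu.
  - unfold Hc. eapply ev_comp; [apply iter_ok|].
    pose proof (compile_ok haltE f (Nat.iter N step (den initE z))) as He.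
    unfold haltE in He at 2. cbn [den] in He. rewrite den_const in He.
    replace (2 - p1 (Nat.iter N step (den initE z))) with 0 in He by lia. exact He.
  - intros m Hlt. specialize (Hm m Hlt). apply Nat.leb_gt in Hm. exists 0.
    unfold Hc. eapply ev_comp; [apply iter_ok|].
    pose proof (compile_ok haltE f (Nat.iter m step (den initE z))) as He.
    unfold haltE in He at 2. cbn [den] in He. rewrite !den_const in He.
    destruct (2 - p1 (Nat.iter m step (den initE z))) eqn:E; [lia|]. exact He.
Qed.


Inductive hcode : Type :=
| hHole | hC (c : code) | hPair (a b : hcode) | hComp (a b : hcode) | hRec (a b : hcode) | hMu (a : hcode).

Fixpoint plug (h : hcode) (k : nat) : code :=
  match h with
  | hHole => decode k | hC c => c
  | hPair a b => cPair (plug a k) (plug b k)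
  | hComp a b => cComp (plug a k) (plug b k)
  | hRec a b => cRec (plug a k) (plug b k)
  | hMu a => cMu (plug a k)
  end.

Fixpoint henc (h : hcode) : ex :=
  match h with
  | hHole => EVar | hC c => EConst (encode c)
  | hPair a b => ESucc (EAdd (EMul10 (EPair (henc a) (henc b))) (EConst 6))
  | hComp a b => ESucc (EAdd (EMul10 (EPair (henc a) (henc b))) (EConst 7))
  | hRec a b => ESucc (EAdd (EMul10 (EPair (henc a) (henc b))) (EConst 8))
  | hMu a => ESucc (EAdd (EMul10 (henc a)) (EConst 9))
  end.

Lemma henc_ok h k : decode (den (henc h) k) = plug h k.
Proof.
  induction h; cbn [henc den plug]; rewrite ?den_const.
  - reflexivity.
  - apply decode_encode.
  - rewrite decode_pair. congruence.
  - rewrite decode_comp. congruence.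
  - rewrite decode_rec. congruence.
  - rewrite decode_mu. congruence.
Qed.

Notation N0 := (fun _ : nat => @None nat).

Lemma app2_det A a b c d1 d2 : (forall x y z1 z2, Defs.app A x y z1 -> Defs.app A x y z2 -> z1 = z2) ->
  app2 A a b c d1 -> app2 A a b c d2 -> d1 = d2.
Proof. intros D [e1 [H1 H1']] [e2 [H2 H2']]. assert (e1 = e2) by eauto. subst. eauto. Qed.

Lemma pair_j p X : is_pairing K1 p -> exists j, forall v, exists w, eval N0 (decode j) v w /\ app2 K1 p X v w.
Proof.
  intros [Hp _]. destruct (Hp X 0) as [c0 [j [Hj _]]]. exists j. intro v.
  destruct (Hp X v) as [w [e [He Hw]]]. exists w.
  assert (e = j) by (eapply eval_det; [exact He| exact Hj]). subst. split; auto. exists j; auto.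
Qed.

Lemma bool_const T F : is_booleans K1 T F -> forall a, exists k, eval N0 (decode T) a k /\
  forall y, eval N0 (decode k) y a.
Proof.
  intros Hb a. destruct (Hb a 0) as [[k [Hk _]] _]. exists k. split; auto. intro y.
  destruct (Hb a y) as [[e [He Hy]] _]. assert (e = k) by (eapply eval_det; [exact He| exact Hk]). subst; auto.
Qed.

Lemma TF_neq T F : is_booleans K1 T F -> T <> F.
Proof.
  intros Hb E. subst. destruct (Hb 0 1) as [H1 H2].
  assert (0 = 1); [|lia]. apply (app2_det K1 F 0 1 0 1); auto.
  intros x y z1 z2 Z1 Z2. eapply eval_det; [exact Z1| exact Z2].
Qed.

Definition PostC jT jF := Ifz (compile (ESub (EP1 EVar) (EConst 2)))
   (cComp (decode jT) (compile sA)) (cComp (decode jF) (compile sA)).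

Lemma post_T jT jF a k l w (HT : forall v, exists w, eval N0 (decode jT) v w) :
  eval N0 (decode jT) a w -> eval N0 (PostC jT jF) (mk 2 a k l) w.
Proof.
  intro H. unfold PostC. apply ifz_0.
  - pose proof (compile_ok (ESub (EP1 EVar) (EConst 2)) N0 (mk 2 a k l)) as E.
    cbn [den] in E. rewrite den_const in E. unfold mk in E. rewrite p1_cp in E. exact E.
  - eapply ev_comp; [apply compile_ok| ]. unfold sA. cbn [den]. unfold mk. rewrite p2_cp, p1_cp. exact H.
Qed.

Lemma post_F jT jF a k l w (HT : forall v, exists w, eval N0 (decode jT) v w) :
  eval N0 (decode jF) a w -> eval N0 (PostC jT jF) (mk 3 a k l) w.
Proof.
  intro H. unfold PostC. destruct (HT a) as [wt Ht]. eapply ifz_S.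
  - pose proof (compile_ok (ESub (EP1 EVar) (EConst 2)) N0 (mk 3 a k l)) as E.
    cbn [den] in E. rewrite den_const in E. unfold mk in E. rewrite p1_cp in E. exact E.
  - eapply ev_comp; [apply compile_ok| ]. unfold sA. cbn [den]. unfold mk. rewrite p2_cp, p1_cp. exact Ht.
  - eapply ev_comp; [apply compile_ok| ]. unfold sA. cbn [den]. unfold mk. rewrite p2_cp, p1_cp. exact H.
Qed.

Definition Eh jT jF := hComp (hC (PostC jT jF)) (hComp (hC RunC) (hPair hHole (hC predC))).

Lemma E_eval jT jF k a a' L s w : (forall y, eval N0 (decode k) y a) ->
  reach (mk 0 (cpair a a') 0 L) s -> 2 <= p1 s -> eval N0 (PostC jT jF) s w ->
  eval N0 (plug (Eh jT jF) k) (S (cpair a' L)) w.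
Proof.
  intros Hk Hr Hs Hp. cbn [plug Eh]. eapply ev_comp; [|exact Hp].
  eapply ev_comp; [apply ev_pair; [apply Hk| apply predC_ok]|].
  apply run_ok; auto. simpl pred. rewrite den_init. exact Hr.
Qed.

Lemma E_correct T F p f jT jF k a a' c e :
  (forall v, exists w, eval N0 (decode jT) v w /\ app2 K1 p T v w) ->
  (forall v, exists w, eval N0 (decode jF) v w /\ app2 K1 p F v w) ->
  (forall y, eval N0 (decode k) y a) ->
  decode e = plug (Eh jT jF) k ->
  eval f (decode a) a' c -> app_rel T F p f e a' c.
Proof.
  intros HT HF Hk He Hev.
  assert (HT' : forall v, exists w, eval N0 (decode jT) v w) by (intro v; destruct (HT v) as [w [? _]]; eauto).
  destruct (sim f _ _ _ Hev) as [tr [ok [S _]]]. destruct (S a eq_refl) as [A B].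
  exists (ans tr). destruct (HT c) as [w [Hw1 Hw2]]. exists w. split; [|split; auto].
  - intros i Hi. unfold ans in Hi. rewrite length_map in Hi.
    destruct (B 0 i Hi) as [K' [L' HR]].
    set (v := fst (nth i tr (0,0))). destruct (HF v) as [w' [Hw'1 Hw'2]].
    exists v, w'. split; [|split; auto].
    + cbn [Defs.app K1 K1f]. unfold phi. rewrite He. simpl seqcode.
      eapply E_eval; [exact Hk| | | ].
      * unfold ans in *. rewrite firstn_map. exact HR.
      * unfold mk. rewrite p1_cp. lia.
      * apply post_F; auto.
    + unfold ans. rewrite (Forall_nth (fun vu : nat * nat => f (fst vu) = Some (snd vu)) tr) in ok.
      specialize (ok i (0,0) Hi). unfold v. rewrite ok. f_equal.
      rewrite <- (map_nth snd tr (0,0) i). reflexivity.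
  - cbn [Defs.app K1 K1f]. unfold phi. rewrite He. simpl seqcode.
    eapply E_eval; [exact Hk| | | ].
    + eapply reach_trans. pose proof (A 0 []) as A0. rewrite app_nil_r in A0. exact A0.
      eapply reach_step; [apply S_ret_nil| apply reach_refl].
    + unfold mk. rewrite p1_cp. lia.
    + apply post_T; auto.
Qed.


Definition Rcode Tn jT jF := cComp (decode jT) (cComp (compile (henc (Eh jT jF)))
   (cComp (decode Tn) (cComp cFst predC))).

Lemma r_correct T F p f jT jF :
  is_booleans K1 T F ->
  (forall v, exists w, eval N0 (decode jT) v w /\ app2 K1 p T v w) ->
  (forall v, exists w, eval N0 (decode jF) v w /\ app2 K1 p F v w) ->
  forall a a' c, phi f a a' c -> app2 (K1rel T F p f) (encode (Rcode T jT jF)) a a' c.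
Proof.
  intros Hb HT HF a a' c Hc.
  destruct (bool_const T F Hb a) as [k [Hk1 Hk2]].
  remember (den (henc (Eh jT jF)) k) as e eqn:Heq.
  exists e. split.
  - destruct (HT e) as [w [Hw1 Hw2]]. exists [], w. split; [|split; auto].
    + intros i Hi. simpl in Hi. lia.
    + cbn [Defs.app K1 K1f]. unfold phi. rewrite decode_encode. unfold Rcode.
      apply (ev_comp _ _ _ _ e); [|exact Hw1].
      apply (ev_comp _ _ _ _ k); [|rewrite Heq; exact (compile_ok (henc (Eh jT jF)) N0 k)].
      apply (ev_comp _ _ _ _ a); [|exact Hk1]. simpl seqcode. eapply ev_comp; [apply predC_ok|].
      simpl pred. apply ev_fst'.
  - eapply E_correct; eauto. rewrite Heq. apply henc_ok.
Qed.


Lemma firstn_S_snoc (l : list nat) k : k < length l -> firstn (S k) l = firstn k l ++ [nth k l 0].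
Proof.
  revert k. induction l; intros k Hk; simpl in Hk; [lia|].
  destruct k; [reflexivity|]. simpl. f_equal. apply IHl. lia.
Qed.

Lemma seqcode_len l : length l <= seqcode l.
Proof. induction l; simpl; auto. pose proof (cp_ge a (seqcode l)). lia. Qed.

Definition revstepE := EIfz (EP2 EVar) EVar
  (EPair (ESucc (EPair (EP1 (EPred (EP2 EVar))) (EP1 EVar))) (EP2 (EPred (EP2 EVar)))).
Definition revE e := EP1 (EIter revstepE (EPair EZero e) e).



Lemma iter_fix' (g : nat -> nat) n s : g s = s -> Nat.iter n g s = s.
Proof. intro H. induction n; simpl; congruence. Qed.

Lemma rev_iter l : forall acc m, length l <= m ->
  Nat.iter m (den revstepE) (cpair (seqcode acc) (seqcode l)) = cpair (seqcode (rev l ++ acc)) 0.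
Proof.
  induction l; intros acc m Hm.
  - simpl. apply iter_fix'. unfold revstepE. cbn [den]. rewrite p2_cp. reflexivity.
  - destruct m as [|m]; simpl in Hm; [lia|]. rewrite Nat.iter_succ_r.
    replace (den revstepE (cpair (seqcode acc) (seqcode (a :: l))))
      with (cpair (seqcode (a :: acc)) (seqcode l)).
    + rewrite IHl by lia. simpl. rewrite <- app_assoc. reflexivity.
    + unfold revstepE. cbn [den seqcode]. rewrite !p2_cp. simpl pred. rewrite !p1_cp, !p2_cp. reflexivity.
Qed.

Lemma den_rev e x l : den e x = seqcode l -> den (revE e) x = seqcode (rev l).
Proof.
  intro H. unfold revE. cbn [den]. rewrite H. change 0 with (seqcode []).
  rewrite rev_iter by apply seqcode_len. rewrite p1_cp, app_nil_r. reflexivity.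
Qed.

Definition hIfz t A B := hComp (hRec A (hComp B (hC (cComp cFst cFst)))) (hPair (hC cId) t).
Lemma plug_hIfz t A B k : plug (hIfz t A B) k = Ifz (plug t k) (plug A k) (plug B k).
Proof. reflexivity. Qed.

Definition xE := EP1 (EP1 EVar).
Definition RE := EP1 (EP2 (EP2 EVar)).
Definition NDE := EP1 (EP2 EVar).
Definition SeqIn := compile (ESucc (EPair xE (revE RE))).
Definition Wh := hComp hHole (hC SeqIn).
Definition P1W p1n := hComp (hC (decode p1n)) Wh.
Definition testh Tn p0n := hComp (hC (compile (EEqb EVar (EConst Tn)))) (hComp (hC (decode p0n)) Wh).
Definition Doneh p1n := hPair (hC cZero) (hPair (hC (compile RE)) (P1W p1n)).
Definition Queryh p1n := hPair (hC (constC 1))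
  (hPair (hComp (hC cSucc) (hPair (hComp (hC cOracle) (P1W p1n)) (hC (compile RE)))) (hC cZero)).
Definition Roundh Tn p0n p1n := hIfz (testh Tn p0n) (Doneh p1n) (Queryh p1n).
Definition Gh Tn p0n p1n := hIfz (hC (compile NDE)) (hC cSnd) (Roundh Tn p0n p1n).
Definition InitC := cPair (constC 1) (cPair cZero cZero).
Definition Looph Tn p0n p1n := hRec (hC InitC) (Gh Tn p0n p1n).
Definition Ch Tn p0n p1n := hComp (hC (cComp cSnd cSnd))
  (hComp (Looph Tn p0n p1n) (hPair (hC cId) (hMu (hComp (hC cFst) (Looph Tn p0n p1n))))).

Definition rstate (b' k : nat) (l : list nat) (nd res : nat) :=
  cpair (cpair b' k) (cpair nd (cpair (seqcode (rev (firstn k l))) res)).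

Lemma W_ok f b b' k l r wv : eval f (decode b) (seqcode (b' :: firstn k l)) wv ->
  eval f (plug Wh b) (rstate b' k l 1 r) wv.
Proof.
  intro H. cbn [Wh plug]. eapply ev_comp; [|exact H]. unfold SeqIn.
  replace (seqcode (b' :: firstn k l)) with (den (ESucc (EPair xE (revE RE))) (rstate b' k l 1 r)).
  apply compile_ok.
  cbn [den seqcode]. f_equal. unfold xE, rstate. cbn [den]. rewrite !p1_cp. f_equal.
  rewrite (den_rev _ _ (rev (firstn k l))). now rewrite rev_involutive.
  unfold RE. cbn [den]. rewrite !p2_cp, !p1_cp. reflexivity.
Qed.

Lemma NDE_ok f b' k l nd r : eval f (compile NDE) (rstate b' k l nd r) nd.
Proof.
  pose proof (compile_ok NDE f (rstate b' k l nd r)) as H. unfold NDE, rstate in *. cbn [den] in H.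
  rewrite !p2_cp, !p1_cp in H. exact H.
Qed.

Lemma RE_ok f b' k l nd r : eval f (compile RE) (rstate b' k l nd r) (seqcode (rev (firstn k l))).
Proof.
  pose proof (compile_ok RE f (rstate b' k l nd r)) as H. unfold RE, rstate in *. cbn [den] in H.
  rewrite !p2_cp, !p1_cp in H. exact H.
Qed.

Lemma test_ok f Tn x : eval f (compile (EEqb EVar (EConst Tn))) x (if x =? Tn then 0 else 1).
Proof. pose proof (compile_ok (EEqb EVar (EConst Tn)) f x) as H. cbn [den] in H. rewrite den_const in H. exact H. Qed.

Section Loop.
Variables (T F p : nat) (f : nat -> option nat) (p0n p1n : nat).
Hypothesis Hp01 : forall a b c, app2 K1 p a b c -> Defs.app K1 p0n c a /\ Defs.app K1 p1n c b.
Hypothesis HTF : T <> F.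
Variables (b b' : nat) (l : list nat).

Lemma round_query k wq v : k < length l ->
  eval N0 (decode b) (seqcode (b' :: firstn k l)) wq -> app2 K1 p F v wq -> f v = Some (nth k l 0) ->
  eval f (plug (Gh T p0n p1n) b) (rstate b' k l 1 0)
     (cpair 1 (cpair (seqcode (rev (firstn (S k) l))) 0)).
Proof.
  intros Hk Hw Hpv Hf. destruct (Hp01 _ _ _ Hpv) as [H0 H1].
  assert (HW : eval f (plug Wh b) (rstate b' k l 1 0) wq) by (apply W_ok; apply eval_mono; exact Hw).
  assert (HP1 : eval f (plug (P1W p1n) b) (rstate b' k l 1 0) v).
  { cbn [P1W plug]. eapply ev_comp; [exact HW| apply eval_mono; exact H1]. }
  unfold Gh. rewrite plug_hIfz. eapply (ifz_S _ _ _ _ _ 0); [apply NDE_ok| apply ev_p2|].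
  unfold Roundh. rewrite plug_hIfz. eapply (ifz_S _ _ _ _ _ 0).
  - cbn [testh plug]. eapply ev_comp; [eapply ev_comp; [exact HW| apply eval_mono; exact H0]|].
    pose proof (test_ok f T F) as Ht. destruct (F =? T) eqn:E; [apply Nat.eqb_eq in E; congruence|]. exact Ht.
  - cbn [Doneh plug]. apply ev_pair; [apply ev_zero| apply ev_pair; [apply RE_ok| exact HP1]].
  - cbn [Queryh plug]. rewrite firstn_S_snoc by auto. rewrite rev_app_distr. simpl rev. simpl seqcode.
    apply ev_pair; [apply constC_ok|]. apply ev_pair; [|apply ev_zero].
    eapply ev_comp; [|apply ev_succ]. apply ev_pair; [|apply RE_ok].
    eapply ev_comp; [exact HP1| apply ev_oracle; exact Hf].
Qed.

Lemma round_done w c :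
  eval N0 (decode b) (seqcode (b' :: l)) w -> app2 K1 p T c w ->
  eval f (plug (Gh T p0n p1n) b) (rstate b' (length l) l 1 0)
     (cpair 0 (cpair (seqcode (rev l)) c)).
Proof.
  intros Hw Hpc. destruct (Hp01 _ _ _ Hpc) as [H0 H1].
  assert (HW : eval f (plug Wh b) (rstate b' (length l) l 1 0) w).
  { apply W_ok. rewrite firstn_all. apply eval_mono; exact Hw. }
  unfold Gh. rewrite plug_hIfz. eapply (ifz_S _ _ _ _ _ 0); [apply NDE_ok| apply ev_p2|].
  unfold Roundh. rewrite plug_hIfz. apply ifz_0.
  - cbn [testh plug]. eapply ev_comp; [eapply ev_comp; [exact HW| apply eval_mono; exact H0]|].
    pose proof (test_ok f T T) as Ht. rewrite Nat.eqb_refl in Ht. exact Ht.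
  - cbn [Doneh plug]. apply ev_pair; [apply ev_zero|]. replace (seqcode (rev l)) with (seqcode (rev (firstn (length l) l))) by (now rewrite firstn_all).
    apply ev_pair; [apply RE_ok|]. cbn [P1W plug]. eapply ev_comp; [exact HW| apply eval_mono; exact H1].
Qed.
End Loop.


Section Loop2.
Variables (T F p : nat) (f : nat -> option nat) (p0n p1n : nat).
Hypothesis Hp01 : forall a b c, app2 K1 p a b c -> Defs.app K1 p0n c a /\ Defs.app K1 p1n c b.
Hypothesis HTF : T <> F.

Lemma loop_ok b b' l w c :
  dialogue T F p f b b' l -> Defs.app K1 b (seqcode (b' :: l)) w -> app2 K1 p T c w ->
  eval f (plug (Ch T p0n p1n) b) b' c.
Proof.
  intros Hd Hw Hc. set (n := length l).
  set (hs := fun j => if j <=? n then cpair 1 (cpair (seqcode (rev (firstn j l))) 0)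
                      else cpair 0 (cpair (seqcode (rev l)) c)).
  assert (HL : forall m, m <= S n -> eval f (plug (Looph T p0n p1n) b) (cpair b' m) (hs m)).
  { intros m Hm. cbn [Looph plug]. apply eval_rec_iter.
    - unfold hs. simpl. apply ev_pair; [apply constC_ok| apply ev_pair; apply ev_zero].
    - intros k Hk. assert (Hkn : k <= n) by lia.
      assert (E : cpair (cpair b' k) (hs k) = rstate b' k l 1 0).
      { unfold hs, rstate. apply Nat.leb_le in Hkn. rewrite Hkn. reflexivity. }
      rewrite E. destruct (Nat.eq_dec k n) as [Ek|Ek].
      + unfold hs. replace (S k <=? n) with false by (symmetry; apply Nat.leb_gt; lia).
        rewrite Ek. unfold n. eapply round_done; eauto. exact Hw.
      + unfold hs. replace (S k <=? n) with true by (symmetry; apply Nat.leb_le; lia).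
        assert (Hkl : k < length l) by (unfold n in *; lia).
        destruct (Hd k Hkl) as [v [wq [Hwq [Hpv Hfv]]]].
        eapply round_query; eauto. exact Hwq. }
  assert (Hfin : hs (S n) = cpair 0 (cpair (seqcode (rev l)) c)).
  { unfold hs. replace (S n <=? n) with false by (symmetry; apply Nat.leb_gt; lia). reflexivity. }
  cbn [Ch plug]. apply (ev_comp _ _ _ _ (hs (S n))).
  2: { rewrite Hfin. eapply ev_comp; [apply ev_snd'| apply ev_snd']. }
  eapply ev_comp; [|apply (HL (S n) (le_n _))].
  apply ev_pair; [apply ev_id|]. apply ev_mu.
  - eapply ev_comp; [apply HL; lia|]. unfold hs.
    replace (S n <=? n) with false by (symmetry; apply Nat.leb_gt; lia). apply ev_fst'.
  - intros m Hm. exists 0. eapply ev_comp; [apply HL; lia|]. unfold hs.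
    replace (m <=? n) with true by (symmetry; apply Nat.leb_le; lia). apply ev_fst'.
Qed.
End Loop2.


Theorem mainTheorem5 :
  forall (T F p : nat),
    is_booleans K1 T F -> is_pairing K1 p ->
    forall f : nat -> option nat,
      pca_isomorphic (K1f f) (K1rel T F p f).
Proof.
  intros T F p Hb Hp f.
  destruct (pair_j p T Hp) as [jT HT]. destruct (pair_j p F Hp) as [jF HF].
  pose proof (TF_neq T F Hb) as HTF.
  destruct Hp as [_ [p0n [p1n Hp01]]].
  exists (id_morph nat), (id_morph nat).
  split; [|split; [|split]].
  - split; [intro a; exists a; reflexivity|].
    exists (encode (Rcode T jT jF)). intros a a' c b b' Hc Hb1 Hb2.
    unfold id_morph in *. subst. exists c. split; [|reflexivity].
    apply r_correct; auto.
  - split; [intro a; exists a; reflexivity|].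
    exists (encode (compile (henc (Ch T p0n p1n)))). intros b b0 c b1 b1' Hc E1 E2.
    unfold id_morph in *. subst. exists c. split; [|reflexivity].
    destruct Hc as [l [w [Hd [Hw Hwc]]]].
    remember (den (henc (Ch T p0n p1n)) b) as e eqn:He.
    exists e. split.
    + cbn [Defs.app K1f]. unfold phi. rewrite decode_encode. rewrite He. apply compile_ok.
    + cbn [Defs.app K1f]. unfold phi. rewrite He, henc_ok.
      eapply loop_ok; eauto.
  - intros a c. unfold comp_morph, id_morph. split.
    + intros [b [-> ->]]. reflexivity.
    + intros ->. exists a. auto.
  - intros a c. unfold comp_morph, id_morph. split.
    + intros [b [-> ->]]. reflexivity.
    + intros ->. exists a. auto.
Qed.
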